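(* Consider a finite super-modular game with player set $\mathcal V$ and binary action sets $\{\pm1\}$. Write $x\uparrow y$ ($x\downarrow y$) if $y$ is reachable from $x$ by a monotone (anti-monotone) I-path, and $x\to y$ if $y$ is reachable from $x$ by an I-path. Then for all $x,x',y,z\in\mathcal X$: (i) if $x\uparrow y$ and $x\uparrow z$, then $x\uparrow (y\vee z)$; (ii) if $x\downarrow y$ and $x\downarrow z$, then $x\downarrow(y\wedge z)$; (iii) if $x\uparrow y$ and $x'\ge x$, then $x'\uparrow(y\vee x')$; (iv) if $x\downarrow y$ and $x'\le x$, then $x'\downarrow(y\wedge x')$; (v) if $x\to y$, then there exist $y''\le y\le y'$ with $x\uparrow y'$ and $x\downarrow y''$. The same five statements hold with I-paths replaced throughout by BR-paths.
   Context: Game: finite player set $\mathcal V$, each player has action set $\{-1,+1\}$, configurations $x\in\mathcal X=\{-1,+1\}^{\mathcal V}$, utilities $u_i:\mathcal X\to\mathbb R$; write $u_i(x)=u_i(x_i,x_{-i})$. The game is super-modular if for every $i$, $u_i(1,x_{-i})-u_i(-1,x_{-i})\ge u_i(1,y_{-i})-u_i(-1,y_{-i})$ whenever $x_{-i}\ge y_{-i}$ (componentwise order). $x\vee y$, $x\wedge y$ are the entrywise max and min. Paths: a length-$l$ admissible path from $x$ to $y$ is $(x^{(0)},\dots,x^{(l)})$ with $x^{(0)}=x$, $x^{(l)}=y$, and for each $k=1,\dots,l$ a player $i_k$ with $x^{(k)}_{-i_k}=x^{(k-1)}_{-i_k}$ and $x^{(k)}_{i_k}\ne x^{(k-1)}_{i_k}$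 (length $0$ allowed). It is an I-path if $u_{i_k}(x^{(k)})>u_{i_k}(x^{(k-1)})$ for all $k$, a BR-path if $u_{i_k}(x^{(k)})\ge u_{i_k}(x^{(k-1)})$ for all $k$; monotone if $x^{(0)}\lneq x^{(1)}\lneq\cdots\lneq x^{(l)}$, anti-monotone if $x^{(0)}\gneq\cdots\gneq x^{(l)}$ (where $x\lneq y$ means $x\le y$, $x\neq y$). *)

(* Defs.v *)
From mathcomp Require Import all_boot all_order all_algebra.
Set Implicit Arguments. Unset Strict Implicit. Unset Printing Implicit Defensive.
Import Order.TTheory GRing.Theory Num.Theory.
Local Open Scope ring_scope.

(* Actions {-1,+1} are encoded as bool: false = -1, true = +1
   (so the order -1 < +1 becomes false < true).
   A configuration x in X = {-1,+1}^V is a finite function V -> bool. *)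
Definition config (V : finType) := {ffun V -> bool}.

Definition cle (V : finType) (x y : config V) : Prop := forall i, x i ==> y i.
Definition clt (V : finType) (x y : config V) : Prop := cle x y /\ x <> y.

Definition cjoin (V : finType) (x y : config V) : config V := [ffun i => x i || y i].
Definition cmeet (V : finType) (x y : config V) : config V := [ffun i => x i && y i].

Definition cupd (V : finType) (x : config V) (i : V) (b : bool) : config V :=
  [ffun j => if j == i then b else x j].

Definition supermodular (V : finType) (R : realFieldType) (u : V -> config V -> R) : Prop :=
  forall (i : V) (x y : config V),
    (forall j, j != i -> y j ==> x j) ->
    u i (cupd y i true) - u i (cupd y i false) <= u i (cupd x i true) - u i (cupd x i false).

(* one admissible step from x to x' via player i, improving (w = false: I-path,
   strict) or weakly improving (w = true: BR-path) player i's utility *)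
Definition istep (V : finType) (R : realFieldType) (u : V -> config V -> R) (w : bool)
  (x x' : config V) : Prop :=
  exists i : V, (forall j, j != i -> x' j = x j) /\ x' i != x i /\
    (if w then u i x <= u i x' else u i x < u i x').

Inductive reach (V : finType) (e : config V -> config V -> Prop) : config V -> config V -> Prop :=
| reach0 x : reach e x x
| reachS x y z : e x y -> reach e y z -> reach e x z.

Definition reach_any (V : finType) (R : realFieldType) (u : V -> config V -> R) (w : bool) :=
  reach (istep u w).
Definition reach_up (V : finType) (R : realFieldType) (u : V -> config V -> R) (w : bool) :=
  reach (fun x x' => istep u w x x' /\ clt x x').
Definition reach_down (V : finType) (R : realFieldType) (u : V -> config V -> R) (w : bool) :=
  reach (fun x x' => istep u w x x' /\ clt x' x).

(* Main.v *)
Require Import Defs.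
From mathcomp Require Import all_boot all_order all_algebra.
From mathcomp Require Import lra.
Import Order.TTheory GRing.Theory Num.Theory.
Local Open Scope ring_scope.
Set Implicit Arguments. Unset Strict Implicit.

Lemma reach_trans (V : finType) (e : config V -> config V -> Prop) x y z :
  reach e x y -> reach e y z -> reach e x z.
Proof. elim=> // a b c hab _ IH /IH; exact: reachS. Qed.

Lemma cle_trans (V : finType) (x y z : config V) : cle x y -> cle y z -> cle x z.
Proof. move=> h1 h2 i; move: (h1 i) (h2 i); by case: (x i); case: (y i). Qed.

Lemma cle_refl (V : finType) (x : config V) : cle x x.
Proof. by move=> i; apply/implyP. Qed.

Lemma cupd_id (V : finType) (x : config V) i b : x i = b -> cupd x i b = x.
Proof. move=> h; apply/ffunP=> j; rewrite ffunE; case: eqP => // ->; by rewrite h. Qed.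

Lemma cupd_at (V : finType) (x : config V) i b : cupd x i b i = b.
Proof. by rewrite ffunE eqxx. Qed.

Lemma cupd_ne (V : finType) (x : config V) i j b : j != i -> cupd x i b j = x j.
Proof. by move=> h; rewrite ffunE (negbTE h). Qed.

Section S.
Variables (V : finType) (R : realFieldType) (u : V -> config V -> R).
Hypothesis hsm : supermodular u.
Variable w : bool.

Lemma up_cle x y : reach_up u w x y -> cle x y.
Proof.
elim=> [a|a b c [_ [h _]] _ IH]; first exact: cle_refl.
exact: cle_trans h IH.
Qed.

Lemma down_cle x y : reach_down u w x y -> cle y x.
Proof.
elim=> [a|a b c [_ [h _]] _ IH]; first exact: cle_refl.
exact: cle_trans IH h.
Qed.

Lemma step_shape x x1 (b : bool) :
  istep u w x x1 -> cle (if b then x else x1) (if b then x1 else x) ->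
  exists i, x i = ~~ b /\ x1 = cupd x i b /\
    (if w then u i x <= u i x1 else u i x < u i x1).
Proof.
move=> [i [ho [hi hu]]] hc; exists i.
have hb : x i = ~~ b /\ x1 i = b.
  move: (hc i) hi; clear hc; case: b; case: (x i); case: (x1 i) => //.
case: hb => h1 h2; split => //; split => //.
apply/ffunP=> j; rewrite ffunE; case: eqP => [->//|/eqP hj]; exact: ho.
Qed.

Lemma up3 x y : reach_up u w x y -> forall x', cle x x' -> reach_up u w x' (cjoin y x').
Proof.
elim=> [a|a a1 yy [st lt] hy IH] x' hxx'.
  have -> : cjoin a x' = x'.
    by apply/ffunP=> j; rewrite ffunE; move: (hxx' j); case: (a j); case: (x' j).
  exact: reach0.
have [i [hai [ha1 hu]]] := step_shape (b:=true) st (proj1 lt).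
have hyi : yy i = true.
  by move: (up_cle hy i); rewrite ha1 cupd_at.
case h': (x' i).
  apply: IH => j; rewrite ha1 ffunE; case: eqP => [->|_]; first by rewrite h'.
  exact: hxx'.
set x'1 := cupd x' i true.
have e : cjoin yy x'1 = cjoin yy x'.
  apply/ffunP=> j; rewrite !ffunE; case: eqP => [->|//]; by rewrite hyi.
rewrite -e; apply: reachS (IH x'1 _); last first.
  move=> j; rewrite ha1 !ffunE; case: eqP => // _; exact: hxx'.
have hs := hsm (y:=a) (x:=x') (i:=i) (fun j _ => hxx' j).
rewrite (@cupd_id _ a i false hai) (@cupd_id _ x' i false h') -ha1 in hs.
split.
  exists i; split; first by move=> j hj; rewrite cupd_ne.
  split; first by rewrite cupd_at h'.
  by case: w hu => hu; lra.
split.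
  move=> j; rewrite ffunE; case: eqP => //; by case: (x' j).
by move=> e0; move: (congr1 (fun f : config V => f i) e0); rewrite cupd_at h'.
Qed.

Lemma down3 x y : reach_down u w x y -> forall x', cle x' x -> reach_down u w x' (cmeet y x').
Proof.
elim=> [a|a a1 yy [st lt] hy IH] x' hxx'.
  have -> : cmeet a x' = x'.
    by apply/ffunP=> j; rewrite ffunE; move: (hxx' j); case: (a j); case: (x' j).
  exact: reach0.
have [i [hai [ha1 hu]]] := step_shape (b:=false) st (proj1 lt).
have hyi : yy i = false.
  by move: (down_cle hy i); rewrite ha1 cupd_at; case: (yy i).
case h': (x' i); last first.
  apply: IH => j; rewrite ha1 ffunE; case: eqP => [->|_]; first by rewrite h'.
  exact: hxx'.
set x'1 := cupd x' i false.
have e : cmeet yy x'1 = cmeet yy x'.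
  apply/ffunP=> j; rewrite !ffunE; case: eqP => [->|//]; by rewrite hyi.
rewrite -e; apply: reachS (IH x'1 _); last first.
  move=> j; rewrite ha1 !ffunE; case: eqP => // _; exact: hxx'.
have hs := hsm (y:=x') (x:=a) (i:=i) (fun j _ => hxx' j).
rewrite (@cupd_id _ a i true hai) (@cupd_id _ x' i true h') -ha1 in hs.
split.
  exists i; split; first by move=> j hj; rewrite cupd_ne.
  split; first by rewrite cupd_at h'.
  by case: w hu => hu; lra.
split.
  move=> j; rewrite ffunE; case: eqP => //; by case: (x' j).
by move=> e0; move: (congr1 (fun f : config V => f i) e0); rewrite cupd_at h'.
Qed.

End S.

Theorem lemma5 (V : finType) (R : realFieldType) (u : V -> config V -> R)
  (hsm : supermodular u) (w : bool) :
  (forall x y z : config V,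
      reach_up u w x y -> reach_up u w x z -> reach_up u w x (cjoin y z)) /\
  (forall x y z : config V,
      reach_down u w x y -> reach_down u w x z -> reach_down u w x (cmeet y z)) /\
  (forall x x' y : config V,
      reach_up u w x y -> cle x x' -> reach_up u w x' (cjoin y x')) /\
  (forall x x' y : config V,
      reach_down u w x y -> cle x' x -> reach_down u w x' (cmeet y x')) /\
  (forall x y : config V,
      reach_any u w x y ->
      exists y' y'' : config V, cle y'' y /\ cle y y' /\
        reach_up u w x y' /\ reach_down u w x y'').
Proof.
split.
  move=> x y z hy hz; exact: reach_trans hz (up3 hsm hy (up_cle hz)).
split.
  move=> x y z hy hz; exact: reach_trans hz (down3 hsm hy (down_cle hz)).
split. move=> x x0 y hy h; exact: (up3 hsm hy h).
split. move=> x x0 y hy h; exact: (down3 hsm hy h).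
move=> x y; elim=> [a|a a1 y0 st _ [y' [y'' [h1 [h2 [hu hd]]]]]].
  by exists a, a; split; [exact: cle_refl|split; [exact: cle_refl|split; exact: reach0]].
move: (st) => [i [ho [hi _]]].
case ha: (a1 i).
  have lt : clt a a1.
    split; last by move=> e; move: hi; rewrite e eqxx.
    move=> j; case: (eqVneq j i) => [->|/ho ->]; [by rewrite ha implybT|by apply/implyP].
  exists y', (cmeet y'' a); split.
    apply: (cle_trans _ h1) => j; rewrite ffunE; by apply/implyP=> /andP[].
  split => //; split; first exact: reachS (conj st lt) hu.
  exact (down3 hsm hd (proj1 lt)).
have lt : clt a1 a.
  split; last by move=> e; move: hi; rewrite e eqxx.
  move=> j; case: (eqVneq j i) => [->|/ho ->]; [by rewrite ha|by apply/implyP].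
exists (cjoin y' a), y''; split => //.
split. apply: (cle_trans h2) => j; rewrite ffunE; by apply/implyP=> ->.
split; last exact: reachS (conj st lt) hd.
exact (up3 hsm hu (proj1 lt)).
Qed.
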